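(* Let $n\ge 3$, $0<m<\frac{n-2}{n}$, $\eta_0>0$, $\rho_1>0$, let $\beta<\frac{m\rho_1}{n-2-nm}$ and $\alpha=\frac{2\beta+\rho_1}{1-m}$. Then there exists a constant $\varepsilon>0$ such that the equation $$(f^m/m)_{rr}+\frac{n-1}{r}(f^m/m)_r+\alpha f+\beta r f_r=0,\quad f>0,$$ has a unique radially symmetric solution $f\in C^1([0,\varepsilon);\mathbb{R})\cap C^2((0,\varepsilon);\mathbb{R})$ in $B_\varepsilon$ (i.e. for $0<r<\varepsilon$) which satisfies $f(0)=\eta_0$, $f_r(0)=0$.
   Context: $B_R=\{x\in\mathbb{R}^n:|x|<R\}$; $r=|x|$ and $f_r$ is the radial derivative. *)

(* Defs.v *)
From Stdlib Require Import Reals.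
From Coquelicot Require Import Coquelicot.
Open Scope R_scope.

Definition C1_on_Ico (f g : R -> R) (eps : R) : Prop :=
  (forall r, 0 < r < eps -> is_derive f r (g r)) /\
  filterlim (fun h => (f h - f 0) / h) (at_right 0) (locally (g 0)) /\
  (forall r, 0 < r < eps -> continuous g r) /\
  filterlim g (at_right 0) (locally (g 0)).

Definition C2_on_Ioo (f : R -> R) (eps : R) : Prop :=
  forall r, 0 < r < eps -> ex_derive_n f 2 r /\ continuous (Derive_n f 2) r.

Definition radial_sol (n : nat) (m alpha beta eta0 eps : R) (f : R -> R) : Prop :=
  (exists g, C1_on_Ico f g eps /\ g 0 = 0) /\
  C2_on_Ioo f eps /\
  (forall r, 0 <= r < eps -> 0 < f r) /\
  f 0 = eta0 /\
  (forall r, 0 < r < eps ->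
     let u := fun s => Rpower (f s) m / m in
     Derive_n u 2 r + (INR n - 1) / r * Derive u r
       + alpha * f r + beta * r * Derive f r = 0).

(* Main.v *)
Require Import Defs.
From Stdlib Require Import Reals Lra Psatz.
From Coquelicot Require Import Coquelicot.
Open Scope R_scope.


Lemma cont_ed (f : R -> R) x :
  (forall e, 0 < e -> exists d, 0 < d /\ forall y, Rabs (y - x) < d -> Rabs (f y - f x) < e) ->
  continuous f x.
Proof.
  intros H. apply (filterlim_locally (F := locally x) f (f x)). intros [e He].
  destruct (H e He) as [d [Hd Hy]]. exists (mkposreal d Hd). intros y Hb.
  apply Hy. exact Hb.
Qed.

Lemma ed_cont (f : R -> R) x : continuous f x ->
  forall e, 0 < e -> exists d, 0 < d /\ forall y, Rabs (y - x) < d -> Rabs (f y - f x) < e.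
Proof.
  intros H e He. destruct (proj1 (filterlim_locally (F := locally x) f (f x)) H (mkposreal e He)) as [[d Hd] Hy].
  exists d. split; [exact Hd|]. intros y Hyd. exact (Hy y Hyd).
Qed.

Lemma ed_right (g : R -> R) l : filterlim g (at_right 0) (locally l) ->
  forall e, 0 < e -> exists d, 0 < d /\ forall h, 0 < h < d -> Rabs (g h - l) < e.
Proof.
  intros H e He. destruct (proj1 (filterlim_locally (F := at_right 0) g l) H (mkposreal e He)) as [[d Hd] Hy].
  exists d. split; auto. intros h [H1 H2]. apply (Hy h). cbn. unfold AbsRing_ball, abs, minus, plus, opp; cbn.
  rewrite Rabs_right; lra. exact H1.
Qed.

Lemma right_ed (g : R -> R) l :
  (forall e, 0 < e -> exists d, 0 < d /\ forall h, 0 < h < d -> Rabs (g h - l) < e) ->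
  filterlim g (at_right 0) (locally l).
Proof.
  intros H. apply (filterlim_locally (F := at_right 0) g l). intros [e He].
  destruct (H e He) as [d [Hd Hy]]. exists (mkposreal d Hd). intros y Hb Hy0.
  apply Hy. cbn in Hb. unfold AbsRing_ball, abs, minus, plus, opp in Hb; cbn in Hb.
  rewrite Rabs_right in Hb; lra.
Qed.

Definition clip (a b x : R) := Rmax a (Rmin b x).

Lemma clip_in a b x : a <= b -> a <= clip a b x <= b.
Proof. intros; unfold clip, Rmax, Rmin; repeat destruct Rle_dec; lra. Qed.
Lemma clip_id a b x : a <= x <= b -> clip a b x = x.
Proof. intros; unfold clip, Rmax, Rmin; repeat destruct Rle_dec; lra. Qed.
Lemma clip_lip a b x y : a <= b -> Rabs (clip a b y - clip a b x) <= Rabs (y - x).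
Proof. intros; unfold clip, Rmax, Rmin; repeat destruct Rle_dec; unfold Rabs; repeat destruct Rcase_abs; lra. Qed.

Definition wcont (f : R -> R) a b z :=
  forall e, 0 < e -> exists d, 0 < d /\ forall y, a <= y <= b -> Rabs (y - z) < d -> Rabs (f y - f z) < e.

Lemma clip_cont f a b : a <= b -> (forall z, a <= z <= b -> wcont f a b z) ->
  forall x, continuous (fun y => f (clip a b y)) x.
Proof.
  intros Hab H x. apply cont_ed. intros e He.
  destruct (H (clip a b x) (clip_in a b x Hab) e He) as [d [Hd Hy]].
  exists d; split; auto. intros y Hyx. apply Hy. apply clip_in; auto.
  eapply Rle_lt_trans. apply clip_lip; auto. auto.
Qed.

Lemma wcont_of_cont f a b z : continuous f z -> wcont f a b z.
Proof. intros H e He. destruct (ed_cont f z H e He) as [d [Hd Hy]]. exists d; split; auto. Qed.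

Lemma wcont_left f a b : a < b -> filterlim (fun h => f (a + h)) (at_right 0) (locally (f a)) -> wcont f a b a.
Proof.
  intros Hab H e He. destruct (ed_right _ _ H e He) as [d [Hd Hy]]. exists d; split; auto.
  intros y Hy1 Hy2. destruct (Req_dec y a). subst. rewrite Rminus_diag, Rabs_R0; auto.
  replace y with (a + (y - a)) by ring. apply Hy. rewrite Rabs_right in Hy2; lra.
Qed.

Lemma exRI (h : R -> R) a b : (forall z, continuous h z) -> ex_RInt h a b.
Proof. intros H. apply (ex_RInt_continuous (V := R_CompleteNormedModule)). intros; apply H. Qed.

Lemma prim_der (h : R -> R) a x : (forall z, continuous h z) -> is_derive (fun y => RInt h a y) x (h x).
Proof.
  intros H. apply (is_derive_RInt h (fun y => RInt h a y) a x).
  apply filter_forall. intros b. apply (RInt_correct (V := R_CompleteNormedModule)). apply exRI; auto. apply H.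
Qed.

Lemma prim_cont (h : R -> R) a x : (forall z, continuous h z) -> continuous (fun y => RInt h a y) x.
Proof. intros H. apply (ex_derive_continuous (K := R_AbsRing) (V := R_NormedModule)). eexists. apply prim_der; auto. Qed.

Lemma pw_der p y : 0 < y -> is_derive (fun x => Rpower x p) y (p * Rpower y (p - 1)).
Proof. intros H. apply is_derive_Reals. apply derivable_pt_lim_power; auto. Qed.

Lemma pw_pos a p : 0 < Rpower a p.
Proof. unfold Rpower. apply exp_pos. Qed.

Lemma pw_mono a b p : 0 <= p -> 0 < a <= b -> Rpower a p <= Rpower b p.
Proof. intros; apply Rle_Rpower_l; auto. Qed.

Lemma pw_anti a b p : p <= 0 -> 0 < a <= b -> Rpower b p <= Rpower a p.
Proof.
  intros Hp Hab. replace p with (- (-p)) by ring. rewrite (Rpower_Ropp a (-p)), (Rpower_Ropp b (-p)).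
  apply Rinv_le_contravar. apply pw_pos. apply Rle_Rpower_l; lra.
Qed.

Lemma pw_split a p : 0 < a -> Rpower a p = a * Rpower a (p - 1).
Proof. intros Ha. rewrite <- (Rpower_1 a) at 2 by auto. rewrite <- Rpower_plus. f_equal; ring. Qed.

Lemma pw_ineq_aux a b p : 0 < p < 1 -> 0 < b <= a ->
  0 <= Rpower a p - Rpower b p <= (a - b) * Rpower a (p - 1).
Proof.
  intros Hp Hab. split. assert (Rpower b p <= Rpower a p) by (apply pw_mono; lra). lra.
  rewrite (pw_split a p), (pw_split b p) by lra.
  assert (Rpower a (p-1) <= Rpower b (p-1)) by (apply pw_anti; lra).
  assert (0 < Rpower a (p-1)) by apply pw_pos. nra.
Qed.

Lemma pw_ineq a b p : 0 < p < 1 -> 0 < a -> 0 < b ->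
  Rabs (Rpower a p - Rpower b p) <= Rabs (a - b) * Rpower (Rmax a b) (p - 1).
Proof.
  intros Hp Ha Hb. destruct (Rle_dec b a).
  - rewrite Rmax_left by lra. pose proof (pw_ineq_aux a b p Hp ltac:(lra)).
    rewrite !Rabs_right by lra. lra.
  - rewrite Rmax_right by lra. pose proof (pw_ineq_aux b a p Hp ltac:(lra)).
    rewrite Rabs_left1 by lra. rewrite Rabs_left by lra. lra.
Qed.

Lemma pw_inv a p q : 0 < a -> p + q = 0 -> Rpower a p * Rpower a q = 1.
Proof. intros Ha Hpq. rewrite <- Rpower_plus, Hpq. apply Rpower_O; auto. Qed.

Lemma cmul (f g : R -> R) x : continuous f x -> continuous g x -> continuous (fun y => f y * g y) x.
Proof. intros; apply (continuous_mult (K := R_AbsRing) f g); auto. Qed.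
Lemma cadd (f g : R -> R) x : continuous f x -> continuous g x -> continuous (fun y => f y + g y) x.
Proof. intros; apply (continuous_plus (K := R_AbsRing) (V := R_NormedModule) f g); auto. Qed.
Lemma csub (f g : R -> R) x : continuous f x -> continuous g x -> continuous (fun y => f y - g y) x.
Proof. intros; apply (continuous_minus (K := R_AbsRing) (V := R_NormedModule) f g); auto. Qed.
Lemma cconst (c : R) x : continuous (fun _ : R => c) x.
Proof. apply continuous_const. Qed.
Lemma cid x : continuous (fun y : R => y) x.
Proof. apply continuous_id. Qed.
Lemma ccomp (f g : R -> R) x : continuous f x -> continuous g (f x) -> continuous (fun y => g (f y)) x.
Proof. intros; apply (continuous_comp f g); auto. Qed.
Lemma cabs (f : R -> R) x : continuous f x -> continuous (fun y => Rabs (f y)) x.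
Proof. intros; apply ccomp; auto. apply continuous_Rabs. Qed.
Lemma cpow (f : R -> R) k x : continuous f x -> continuous (fun y => f y ^ k) x.
Proof. intros H; induction k; simpl. apply cconst. apply cmul; auto. Qed.
Lemma cinv (f : R -> R) x : continuous f x -> f x <> 0 -> continuous (fun y => / f y) x.
Proof. intros H Hn; apply ccomp; auto. apply continuity_pt_filterlim. apply continuity_pt_inv; auto. apply continuity_pt_id. Qed.
Lemma cdiv (f g : R -> R) x : continuous f x -> continuous g x -> g x <> 0 -> continuous (fun y => f y / g y) x.
Proof. intros; unfold Rdiv; apply cmul; auto; apply cinv; auto. Qed.
Lemma cexp (f : R -> R) x : continuous f x -> continuous (fun y => exp (f y)) x.
Proof. intros; apply ccomp; auto. apply continuity_pt_filterlim. apply derivable_continuous_pt. apply derivable_pt_exp. Qed.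
Lemma cpw (f : R -> R) p x : continuous f x -> 0 < f x -> continuous (fun y => Rpower (f y) p) x.
Proof.
  intros H Hp. apply (ccomp f (fun y => Rpower y p)); auto. apply (ex_derive_continuous (K := R_AbsRing) (V := R_NormedModule)). exists (p * Rpower (f x) (p - 1)).
  apply is_derive_Reals. apply derivable_pt_lim_power; auto.
Qed.


Lemma RInt_scalR (f : R -> R) a b l : ex_RInt f a b -> RInt (fun x => l * f x) a b = l * RInt f a b.
Proof. intros H. exact (RInt_scal (V := R_CompleteNormedModule) f a b l H). Qed.
Lemma RInt_minusR (f g : R -> R) a b : ex_RInt f a b -> ex_RInt g a b ->
  RInt (fun x => f x - g x) a b = RInt f a b - RInt g a b.
Proof. intros H1 H2. exact (RInt_minus (V := R_CompleteNormedModule) f g a b H1 H2). Qed.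
Lemma RInt_pointR (f : R -> R) a : RInt f a a = 0.
Proof. exact (RInt_point (V := R_CompleteNormedModule) a f). Qed.

Definition Ii (n : nat) (f : R -> R) (s : R) := RInt (fun t => t ^ (n - 1) * f t) 0 s.
Definition Qf (n : nat) (beta c : R) (f : R -> R) (s : R) :=
  beta * s * f s + c * (Ii n f s / s ^ (n - 1)).

Lemma Qf0 n beta c f : Qf n beta c f 0 = 0.
Proof. unfold Qf, Ii. rewrite RInt_pointR. unfold Rdiv. ring. Qed.

Lemma cont_w n (h : R -> R) : (forall z, continuous h z) -> forall z, continuous (fun t => t ^ (n - 1) * h t) z.
Proof. intros H z. apply cmul; auto. apply cpow, cid. Qed.

Lemma pow_abs_le k t x : 0 <= t <= x -> Rabs (t ^ k) <= x ^ k.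
Proof. intros H. rewrite <- RPow_abs. rewrite Rabs_right by lra. apply pow_incr; lra. Qed.

Lemma int_bound n h x B : 0 < x -> (forall z, continuous h z) ->
  (forall t, 0 <= t <= x -> Rabs (h t) <= B) -> Rabs (Ii n h x / x ^ (n - 1)) <= x * B.
Proof.
  intros Hx Hc Hb. assert (HB : 0 <= B) by (eapply Rle_trans; [apply Rabs_pos| apply (Hb 0); lra]).
  assert (Hp : 0 < x ^ (n - 1)) by (apply pow_lt; lra).
  assert (H : Rabs (Ii n h x) <= (x - 0) * (x ^ (n - 1) * B)).
  { apply abs_RInt_le_const. lra. apply exRI, cont_w; auto.
    intros t Ht. rewrite Rabs_mult. apply Rmult_le_compat; try apply Rabs_pos.
    apply pow_abs_le; lra. auto. }
  unfold Rdiv. rewrite Rabs_mult, Rabs_inv, (Rabs_right (x ^ _)) by lra.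
  apply (Rmult_le_reg_r (x ^ (n - 1))); auto. rewrite Rmult_assoc, Rinv_l by lra. nra.
Qed.

Lemma int_bound2 n h x : 0 < x -> (forall z, continuous h z) ->
  Rabs (Ii n h x / x ^ (n - 1)) <= RInt (fun t => Rabs (h t)) 0 x.
Proof.
  intros Hx Hc. assert (Hp : 0 < x ^ (n - 1)) by (apply pow_lt; lra).
  assert (H : Rabs (Ii n h x) <= x ^ (n - 1) * RInt (fun t => Rabs (h t)) 0 x).
  { eapply Rle_trans. apply abs_RInt_le. lra. apply exRI, cont_w; auto.
    rewrite <- RInt_scalR. apply RInt_le. lra.
    apply exRI. intros z; apply cabs, cont_w; auto.
    apply exRI. intros z; apply cmul. apply cconst. apply cabs; auto.
    intros t Ht. rewrite Rabs_mult. apply Rmult_le_compat_r. apply Rabs_pos. apply pow_abs_le; lra.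
    apply exRI. intros z; apply cabs; auto. }
  unfold Rdiv. rewrite Rabs_mult, Rabs_inv, (Rabs_right (x ^ _)) by lra.
  apply (Rmult_le_reg_r (x ^ (n - 1))); auto. rewrite Rmult_assoc, Rinv_l by lra. nra.
Qed.

Lemma Ii_minus n f g x : (forall z, continuous f z) -> (forall z, continuous g z) ->
  Ii n f x - Ii n g x = Ii n (fun t => f t - g t) x.
Proof.
  intros Hf Hg. unfold Ii. rewrite <- (RInt_minusR (fun t => t^(n-1)*f t) (fun t => t^(n-1)*g t)). apply RInt_ext. intros; simpl; ring.
  apply exRI, cont_w; auto. apply exRI, cont_w; auto.
Qed.


Lemma kb n beta c p t1 lo Mf Mg (f g : R -> R) x :
  0 < p < 1 -> 0 < x <= t1 -> 0 < lo ->
  (forall z, continuous f z) -> (forall z, continuous g z) ->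
  (forall r, 0 <= r <= t1 -> lo <= f r <= Mf) -> (forall r, 0 <= r <= t1 -> 0 < g r <= Mg) ->
  Rabs (Rpower (f x) p * Qf n beta c f x - Rpower (g x) p * Qf n beta c g x) <=
  (Rpower Mf p * (Rabs beta * t1 + Rabs c) + (Rabs beta + Rabs c) * t1 * Mg * Rpower lo (p - 1))
   * (Rabs (f x - g x) + RInt (fun t => Rabs (f t - g t)) 0 x).
Proof.
  intros Hp Hx Hlo Hf Hg Hfb Hgb.
  assert (Hxn : 0 < x ^ (n - 1)) by (apply pow_lt; lra).
  set (A := Rpower (f x) p). set (B := Rpower (g x) p).
  set (Qa := Qf n beta c f x). set (Qb := Qf n beta c g x).
  set (dd := f x - g x). set (XX := RInt (fun t => Rabs (f t - g t)) 0 x).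
  assert (HX0 : 0 <= XX).
  { unfold XX. apply RInt_ge_0. lra. apply exRI; intros; apply cabs, csub; auto. intros; apply Rabs_pos. }
  assert (HQ : Qa - Qb = beta * x * dd + c * (Ii n (fun t => f t - g t) x / x ^ (n - 1))).
  { unfold Qa, Qb, Qf, dd. rewrite <- Ii_minus by auto. field. lra. }
  assert (HQd : Rabs (Qa - Qb) <= Rabs beta * t1 * Rabs dd + Rabs c * XX).
  { rewrite HQ. eapply Rle_trans. apply Rabs_triang. rewrite !Rabs_mult.
    pose proof (int_bound2 n (fun t => f t - g t) x ltac:(lra) ltac:(intros; apply csub; auto)).
    fold XX in H. rewrite (Rabs_right x) by lra.
    assert (0 <= Rabs beta) by apply Rabs_pos. assert (0 <= Rabs dd) by apply Rabs_pos.
    assert (0 <= Rabs c) by apply Rabs_pos. apply Rplus_le_compat. apply Rmult_le_compat_r; auto. apply Rmult_le_compat_l; lra. apply Rmult_le_compat_l; auto. }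
  assert (HA : 0 < A <= Rpower Mf p).
  { split. apply pw_pos. apply pw_mono. lra. specialize (Hfb x ltac:(lra)). lra. }
  assert (HQb : Rabs Qb <= (Rabs beta + Rabs c) * t1 * Mg).
  { unfold Qb, Qf. eapply Rle_trans. apply Rabs_triang. rewrite !Rabs_mult.
    pose proof (int_bound n g x Mg ltac:(lra) Hg) as Hi.
    assert (Hi' : Rabs (Ii n g x / x ^ (n - 1)) <= x * Mg).
    { apply Hi. intros t Ht. specialize (Hgb t ltac:(lra)). rewrite Rabs_right; lra. }
    specialize (Hgb x ltac:(lra)). rewrite (Rabs_right x), (Rabs_right (g x)) by lra.
    assert (0 <= Rabs beta) by apply Rabs_pos. assert (0 <= Rabs c) by apply Rabs_pos. assert (x * g x <= t1 * Mg) by (apply Rmult_le_compat; lra). assert (x * Mg <= t1 * Mg) by (apply Rmult_le_compat_r; lra). nra. }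
  assert (HAB : Rabs (A - B) <= Rabs dd * Rpower lo (p - 1)).
  { unfold A, B, dd. specialize (Hfb x ltac:(lra)). specialize (Hgb x ltac:(lra)).
    eapply Rle_trans. apply pw_ineq; lra. apply Rmult_le_compat_l. apply Rabs_pos.
    apply pw_anti. lra. split. lra. eapply Rle_trans; [|apply Rmax_l]. lra. }
  replace (A * Qa - B * Qb) with (A * (Qa - Qb) + Qb * (A - B)) by ring.
  eapply Rle_trans. apply Rabs_triang. rewrite !Rabs_mult. rewrite (Rabs_right A) by lra.
  assert (0 <= Rabs dd) by apply Rabs_pos. assert (0 < Rpower lo (p - 1)) by apply pw_pos.
  assert (0 <= Rabs beta) by apply Rabs_pos. assert (0 <= Rabs c) by apply Rabs_pos.
  assert (0 <= Rabs (Qa - Qb)) by apply Rabs_pos. assert (0 <= Rabs Qb) by apply Rabs_pos.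
  assert (0 <= Rabs (A - B)) by apply Rabs_pos.
  assert (A * Rabs (Qa - Qb) <= Rpower Mf p * (Rabs beta * t1 * Rabs dd + Rabs c * XX)) by nra.
  assert (Rabs Qb * Rabs (A - B) <= (Rabs beta + Rabs c) * t1 * Mg * (Rabs dd * Rpower lo (p - 1))).
  { apply Rmult_le_compat; auto. }
  assert (0 <= Rpower Mf p) by (apply Rlt_le, pw_pos).
  assert (0 <= (Rabs beta + Rabs c) * t1 * Mg * Rpower lo (p - 1) * XX).
  { assert (0 < Mg) by (specialize (Hgb x ltac:(lra)); lra). repeat apply Rmult_le_pos; lra. }
  assert (0 <= Rpower Mf p * Rabs beta * t1 * XX).
  { repeat apply Rmult_le_pos; lra. }
  assert (0 <= Rpower Mf p * Rabs c * Rabs dd) by (apply Rmult_le_pos; [apply Rmult_le_pos|]; lra).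
  nra.
Qed.

Lemma Hder_test (f g X : R -> R) k x : ex_derive f x -> ex_derive g x -> ex_derive X x ->
  is_derive (fun y => ((f y - g y)^2 + (X y)^2) * exp (-(k*y))) x
   ((2 * (f x - g x) * (Derive f x - Derive g x) + 2 * X x * Derive X x - k * ((f x - g x)^2 + X x ^2)) * exp (-(k*x))).
Proof. intros. auto_derive. repeat split; auto. change (fun x0 : R => f x0) with f. change (fun x0 : R => g x0) with g. change (fun x0 : R => X x0) with X. ring. Qed.

Lemma copp (f : R -> R) x : continuous f x -> continuous (fun y => - f y) x.
Proof. intros; apply (continuous_opp (K := R_AbsRing) (V := R_NormedModule) f); auto. Qed.

Lemma cont_pt (f : R -> R) x : continuous f x -> continuity_pt f x.
Proof. intros; apply continuity_pt_filterlim; auto. Qed.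

Lemma uniq_core n beta c p t1 lo (f g : R -> R) :
  0 < p < 1 -> 0 < t1 -> 0 < lo ->
  (forall z, continuous f z) -> (forall z, continuous g z) ->
  (forall r, 0 <= r <= t1 -> lo <= f r) -> (forall r, 0 <= r <= t1 -> 0 < g r) ->
  f 0 = g 0 ->
  (forall r, 0 < r < t1 -> is_derive f r (- (Rpower (f r) p * Qf n beta c f r))) ->
  (forall r, 0 < r < t1 -> is_derive g r (- (Rpower (g r) p * Qf n beta c g r))) ->
  forall r, 0 <= r <= t1 -> f r = g r.
Proof.
  intros Hp Ht1 Hlo Hf Hg Hfl Hgp H0 Hdf Hdg.
  destruct (continuity_ab_maj f 0 t1 ltac:(lra) (fun z _ => cont_pt f z (Hf z))) as [xf [Hxf Hxf2]].
  destruct (continuity_ab_maj g 0 t1 ltac:(lra) (fun z _ => cont_pt g z (Hg z))) as [xg [Hxg Hxg2]].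
  set (Mf := f xf). set (Mg := g xg).
  set (L := Rpower Mf p * (Rabs beta * t1 + Rabs c) + (Rabs beta + Rabs c) * t1 * Mg * Rpower lo (p - 1)).
  assert (HL : 0 <= L).
  { assert (0 < Mg) by (apply Hgp; lra). assert (0 < Rpower Mf p) by apply pw_pos.
    assert (0 < Rpower lo (p-1)) by apply pw_pos. assert (0 <= Rabs beta) by apply Rabs_pos.
    assert (0 <= Rabs c) by apply Rabs_pos. unfold L.
    apply Rplus_le_le_0_compat; repeat apply Rmult_le_pos; nra. }
  set (X := (fun x => RInt (fun t => Rabs (f t - g t)) 0 x) : R -> R).
  set (k := 3 * L + 1).
  set (H := fun y => ((f y - g y)^2 + (X y)^2) * exp (-(k*y))).
  set (Dv := fun x => - (Rpower (f x) p * Qf n beta c f x) + Rpower (g x) p * Qf n beta c g x).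
  set (dH := fun x => (2 * (f x - g x) * Dv x + 2 * X x * Rabs (f x - g x) - k * ((f x - g x)^2 + X x ^2)) * exp (-(k*x))).
  assert (HXc : forall z, continuous (fun t => Rabs (f t - g t)) z) by (intros; apply cabs, csub; auto).
  assert (HXd : forall x, is_derive X x (Rabs (f x - g x))) by (intros x; unfold X; apply (prim_der (fun t => Rabs (f t - g t)) 0 x); auto).
  assert (HX0 : forall x, 0 <= x -> 0 <= X x).
  { intros x Hx. unfold X. apply RInt_ge_0; auto. apply exRI; auto. intros; apply Rabs_pos. }
  intros r Hr. destruct (Req_dec r 0) as [->|Hr0]; auto.
  assert (Hbd : H r <= 0).
  { destruct (MVT_gen H 0 r dH) as [xi [Hxi Heq]].
    - rewrite Rmin_left, Rmax_right by lra. intros x Hx.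
      pose proof (Hder_test f g X k x (ex_intro _ _ (Hdf x ltac:(lra))) (ex_intro _ _ (Hdg x ltac:(lra)))
        (ex_intro _ _ (HXd x))) as HD.
      rewrite (is_derive_unique _ _ _ (Hdf x ltac:(lra))), (is_derive_unique _ _ _ (Hdg x ltac:(lra))),
        (is_derive_unique _ _ _ (HXd x)) in HD.
      unfold H. match type of HD with is_derive _ _ ?v => replace (dH x) with v by (unfold dH, Dv; ring) end. exact HD.
    - intros x _. apply cont_pt. unfold H. apply cmul. apply cadd. apply cpow, csub; auto.
      apply cpow. apply (ex_derive_continuous (K := R_AbsRing) (V := R_NormedModule)). eexists; apply HXd.
      apply cexp. apply copp. apply cmul. apply cconst. apply cid.
    - rewrite Rmin_left, Rmax_right in Hxi by lra.
      assert (HH0 : H 0 = 0). { unfold H, X. rewrite H0, RInt_pointR. ring. }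
      rewrite HH0 in Heq.
      assert (dH xi <= 0).
      { destruct (Req_dec xi 0) as [->|Hxi0].
        - unfold dH, X. rewrite H0, RInt_pointR. right. ring.
        - unfold dH. assert (He : 0 < exp (- (k * xi))) by apply exp_pos.
          cut (2 * (f xi - g xi) * Dv xi + 2 * X xi * Rabs (f xi - g xi) - k * ((f xi - g xi) ^ 2 + X xi ^ 2) <= 0).
          { intros; nra. }
          assert (Hk := kb n beta c p t1 lo Mf Mg f g xi Hp ltac:(lra) Hlo Hf Hg
             (fun r Hr => conj (Hfl r Hr) (Hxf r Hr)) (fun r Hr => conj (Hgp r Hr) (Hxg r Hr))).
          fold L in Hk. fold X in Hk.
          assert (HD : Rabs (Dv xi) <= L * (Rabs (f xi - g xi) + X xi)).
          { unfold Dv. replace (- (Rpower (f xi) p * Qf n beta c f xi) + Rpower (g xi) p * Qf n beta c g xi)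
              with (- (Rpower (f xi) p * Qf n beta c f xi - Rpower (g xi) p * Qf n beta c g xi)) by ring.
            rewrite Rabs_Ropp. exact Hk. }
          set (dd := f xi - g xi) in *. set (XX := X xi) in *.
          assert (0 <= XX) by (apply HX0; lra).
          assert (2 * dd * Dv xi <= 2 * Rabs dd * Rabs (Dv xi)).
          { rewrite Rmult_assoc. rewrite (Rmult_assoc 2). apply Rmult_le_compat_l. lra.
            rewrite <- Rabs_mult. apply Rle_abs. }
          assert (Rabs dd * Rabs (Dv xi) <= Rabs dd * (L * (Rabs dd + XX))).
          { apply Rmult_le_compat_l; auto. apply Rabs_pos. }
          assert (Hsq : dd ^ 2 = Rabs dd * Rabs dd).
          { rewrite <- Rabs_mult. simpl. rewrite Rmult_1_r. rewrite Rabs_right; [ring|]. 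
            apply Rle_ge, Rle_0_sqr. }
          assert (0 <= Rabs dd) by apply Rabs_pos.
          set (a := Rabs dd) in *.
          assert (Ha2 : 2 * a * XX <= a * a + XX * XX). { assert (0 <= (a - XX) * (a - XX)) by apply Rle_0_sqr. lra. }
          assert (L * (2 * a * XX) <= L * (a * a + XX * XX)) by (apply Rmult_le_compat_l; lra).
          assert (2 * dd * Dv xi <= 2 * (L * (a * a) + L * (a * XX))) by nra.
          unfold k. rewrite Hsq. replace (XX ^ 2) with (XX * XX) by ring.
          replace (2 * XX * a) with (2 * a * XX) by ring. assert (0 <= L * (XX * XX)) by (apply Rmult_le_pos; nra). lra. }
      assert (0 <= - dH xi * (r - 0)) by (apply Rmult_le_pos; lra). lra. }
  assert (HHp : 0 <= (f r - g r) ^ 2 + X r ^ 2) by (pose proof (pow2_ge_0 (f r - g r)); pose proof (pow2_ge_0 (X r)); lra).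
  unfold H in Hbd. assert (He : 0 < exp (-(k * r))) by apply exp_pos.
  assert ((f r - g r) ^ 2 + X r ^ 2 = 0).
  { apply Rle_antisym; auto. apply (Rmult_le_reg_r (exp (-(k*r)))); auto. lra. }
  nra.
Qed.


Lemma der_pwc (g : R -> R) q s G : 0 < g s -> is_derive g s G ->
  is_derive (fun x => Rpower (g x) q) s (q * Rpower (g s) (q - 1) * G).
Proof.
  intros Hp HG. pose proof (is_derive_comp (fun y => Rpower y q) g s _ _ (pw_der q (g s) Hp) HG) as H.
  replace (q * Rpower (g s) (q - 1) * G) with (scal G (q * Rpower (g s) (q - 1))). exact H.
  unfold scal; simpl; unfold mult; simpl. ring.
Qed.

Lemma ex_der_cont (f : R -> R) x : ex_derive f x -> continuous f x.
Proof. intros; apply (ex_derive_continuous (K := R_AbsRing) (V := R_NormedModule)); auto. Qed.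

Lemma locally_open a b x (P : R -> Prop) : a < x < b -> (forall y, a < y < b -> P y) -> locally x P.
Proof.
  intros Hx HP. assert (Hd : 0 < Rmin (x - a) (b - x)) by (apply Rmin_glb_lt; lra).
  exists (mkposreal _ Hd). intros y Hy. apply HP. cbn in Hy. unfold AbsRing_ball, abs, minus, plus, opp in Hy; cbn in Hy.
  pose proof (Rmin_l (x - a) (b - x)). pose proof (Rmin_r (x - a) (b - x)).
  apply Rabs_def2 in Hy. lra.
Qed.

Lemma rcont_of_rder (g : R -> R) l : filterlim (fun h => (g h - g 0) / h) (at_right 0) (locally l) ->
  filterlim (fun h => g (0 + h)) (at_right 0) (locally (g 0)).
Proof.
  intros H. apply right_ed. intros e He.
  destruct (ed_right _ _ H 1 ltac:(lra)) as [d [Hd Hy]].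
  assert (Hl : 0 < Rabs l + 1) by (pose proof (Rabs_pos l); lra).
  exists (Rmin d (e / (Rabs l + 1))). split. apply Rmin_glb_lt; auto. apply Rdiv_lt_0_compat; lra.
  intros h [Hh1 Hh2]. pose proof (Rmin_l d (e / (Rabs l + 1))). pose proof (Rmin_r d (e / (Rabs l + 1))).
  specialize (Hy h ltac:(lra)). rewrite Rplus_0_l.
  replace (g h - g 0) with (h * ((g h - g 0) / h)) by (field; lra).
  rewrite Rabs_mult, Rabs_right by lra.
  assert (Rabs ((g h - g 0) / h) < Rabs l + 1).
  { replace ((g h - g 0) / h) with (((g h - g 0) / h - l) + l) by ring.
    eapply Rle_lt_trans. apply Rabs_triang. lra. }
  assert (h * (Rabs l + 1) < e).
  { apply (Rmult_lt_reg_r (/ (Rabs l + 1))). apply Rinv_0_lt_compat; lra.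
    rewrite Rmult_assoc, Rinv_r by lra. rewrite Rmult_1_r. unfold Rdiv in *. lra. }
  assert (0 <= Rabs ((g h - g 0) / h)) by apply Rabs_pos. nra.
Qed.


Lemma hat_cont n m alpha beta eta0 eps g t1 :
  radial_sol n m alpha beta eta0 eps g -> 0 < t1 < eps ->
  forall z, continuous (fun x => g (clip 0 t1 x)) z.
Proof.
  intros [[G [[HG1 [HG2 [HG3 HG4]]] HG0]] _] Ht1.
  apply clip_cont. lra. intros z Hz. destruct (Req_dec z 0) as [->|Hz0].
  - apply wcont_left. lra. eapply rcont_of_rder. exact HG2.
  - apply wcont_of_cont. apply ex_der_cont. exists (G z). apply HG1. lra.
Qed.

Lemma ode_id n m alpha beta eta0 eps g t1 :
  (3 <= n)%nat -> 0 < m < 1 -> 0 < eta0 ->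
  radial_sol n m alpha beta eta0 eps g -> 0 < t1 < eps ->
  forall r, 0 < r < t1 ->
  is_derive (fun x => g (clip 0 t1 x)) r
    (- (Rpower (g (clip 0 t1 r)) (1 - m) *
        Qf n beta (alpha - INR n * beta) (fun x => g (clip 0 t1 x)) r)).
Proof.
  intros Hn Hm Heta Hsol Ht1.
  pose proof (hat_cont _ _ _ _ _ _ _ _ Hsol Ht1) as Hghc.
  destruct Hsol as [[G [[HG1 [HG2 [HG3 HG4]]] HG0]] [HC2 [Hpos [Hg0 Hode]]]].
  set (gh := fun x => g (clip 0 t1 x)) in *.
  assert (Hgh : forall r, 0 <= r <= t1 -> gh r = g r) by (intros; unfold gh; rewrite clip_id; auto).
  set (c := alpha - INR n * beta).
  set (u := fun s => Rpower (g s) m / m).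
  assert (HDg : forall s, 0 < s < eps -> Derive g s = G s) by (intros; apply is_derive_unique; apply HG1; auto).
  assert (Hu1 : forall s, 0 < s < eps -> is_derive u s (Rpower (g s) (m - 1) * G s)).
  { intros s Hs. apply (is_derive_ext (fun x => / m * Rpower (g x) m) u).
    { intros; unfold u, Rdiv. apply Rmult_comm. }
    replace (Rpower (g s) (m - 1) * G s) with (/ m * (m * Rpower (g s) (m - 1) * G s)) by (field; lra).
    apply is_derive_scal. apply der_pwc. apply Hpos; lra. apply HG1; auto. }
  assert (HDu : forall s, 0 < s < eps -> Derive u s = Rpower (g s) (m - 1) * G s)
    by (intros; apply is_derive_unique; apply Hu1; auto).
  assert (Hu2 : forall r, 0 < r < eps -> is_derive (Derive u) r (Derive_n u 2 r)).
  { intros r Hr. apply Derive_correct.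
    apply ex_derive_ext_loc with (f := fun s => Rpower (g s) (m - 1) * Derive g s).
    apply (locally_open 0 eps); auto. intros y Hy. rewrite HDu, HDg; auto.
    apply ex_derive_mult. eexists. apply der_pwc. apply Hpos; lra. apply HG1; auto.
    destruct (HC2 r Hr) as [Hex _]. exact Hex. }
  destruct n as [|[|[|k]]]; try lia.
  set (n := S (S (S k))) in *.
  set (Psi := fun s => s ^ (S (S k)) * Derive u s + beta * s ^ (S (S (S k))) * g s + c * Ii n gh s).
  assert (HIi : forall r, is_derive (Ii n gh) r (r ^ (S (S k)) * gh r)).
  { intros r. unfold Ii. apply (prim_der (fun t => t ^ (n - 1) * gh t) 0 r). apply cont_w; auto. }
  assert (HPsi : forall r, 0 < r < t1 -> is_derive Psi r 0).
  { intros r Hr.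
    assert (E1 : ex_derive (Derive u) r) by (eexists; apply Hu2; lra).
    assert (E2 : ex_derive g r) by (eexists; apply HG1; lra).
    assert (E3 : ex_derive (Ii n gh) r) by (eexists; apply HIi).
    unfold Psi. auto_derive. repeat split; auto.
    change (fun x : R => Derive u x) with (Derive u). change (fun x : R => g x) with g.
    change (fun x : R => Ii n gh x) with (Ii n gh).
    rewrite (is_derive_unique _ _ _ (Hu2 r ltac:(lra))), (is_derive_unique _ _ _ (HIi r)).
    rewrite HDg by lra. rewrite <- HDg by lra.
    specialize (Hode r ltac:(lra)). cbv zeta in Hode. fold u in Hode.
    change (match k with | 0%nat => 1 | S _ => INR k + 1 end) with (INR (S k)).
    rewrite Hgh by lra.
    assert (Hn' : INR n = INR (S k) + 2) by (unfold n; rewrite !S_INR; ring).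
    rewrite Hn' in Hode. unfold c. rewrite Hn'.
    replace (Derive_n u 2 r) with (- ((INR (S k) + 2 - 1) / r * Derive u r + alpha * g r + beta * r * Derive g r)) by lra.
    change (r ^ S (S k)) with (r * (r * r ^ k)). field. lra. }
  assert (HPc : forall a b, 0 < a < t1 -> 0 < b < t1 -> Psi a = Psi b).
  { intros a b Ha Hb. destruct (MVT_gen Psi a b (fun _ => 0)) as [xi [_ Heq]].
    - intros x Hx. apply HPsi. pose proof (Rmin_l a b). pose proof (Rmin_r a b).
      pose proof (Rmax_l a b). pose proof (Rmax_r a b).
      split. destruct (Rle_dec a b); [rewrite Rmin_left in Hx|rewrite Rmin_right in Hx]; lra.
      destruct (Rle_dec a b); [rewrite Rmax_right in Hx|rewrite Rmax_left in Hx]; lra.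
    - intros x Hx. apply cont_pt, ex_der_cont. exists 0. apply HPsi.
      split. destruct (Rle_dec a b); [rewrite Rmin_left in Hx|rewrite Rmin_right in Hx]; lra.
      destruct (Rle_dec a b); [rewrite Rmax_right in Hx|rewrite Rmax_left in Hx]; lra.
    - lra. }
  assert (Hsmall : forall e, 0 < e -> exists r, 0 < r < t1 /\ Rabs (Psi r) < e).
  { intros e He.
    destruct (ed_right G (G 0) HG4 1 ltac:(lra)) as [d1 [Hd1 HG1b]]. rewrite HG0 in HG1b.
    destruct (ed_right _ _ (rcont_of_rder g _ HG2) (eta0 / 2) ltac:(lra)) as [d2 [Hd2 Hg2b]].
    set (A0 := Rpower (eta0 / 2) (m - 1)).
    assert (HA0 : 0 < A0) by apply pw_pos.
    set (C := A0 + Rabs beta * (3 * eta0 / 2) + Rabs c * (3 * eta0 / 2)).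
    assert (HC : 0 < C) by (pose proof (Rabs_pos beta); pose proof (Rabs_pos c); unfold C; nra).
    set (r := Rmin (Rmin (Rmin d1 d2) (Rmin t1 1)) (e / (2 * C))).
    assert (Hr1 : r <= Rmin (Rmin d1 d2) (Rmin t1 1)) by apply Rmin_l.
    assert (Hr2 : r <= e / (2 * C)) by apply Rmin_r.
    pose proof (Rmin_l d1 d2). pose proof (Rmin_r d1 d2). pose proof (Rmin_l t1 1). pose proof (Rmin_r t1 1).
    pose proof (Rmin_l (Rmin d1 d2) (Rmin t1 1)). pose proof (Rmin_r (Rmin d1 d2) (Rmin t1 1)).
    assert (Hrp : 0 < r).
    { unfold r. repeat apply Rmin_glb_lt; try lra. apply Rdiv_lt_0_compat; lra. }
    set (s := r / 2). assert (Hs : 0 < s < 1) by (unfold s; lra).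
    assert (Hst : s < t1) by (unfold s; lra).
    exists s. split. lra.
    assert (Hgs : forall t, 0 < t <= s -> eta0 / 2 < g t < 3 * eta0 / 2).
    { intros t Ht. specialize (Hg2b t ltac:(unfold s in *; lra)). rewrite Rplus_0_l, Hg0 in Hg2b.
      apply Rabs_def2 in Hg2b. lra. }
    assert (HGs : Rabs (G s) < 1) by (specialize (HG1b s ltac:(unfold s in *; lra)); rewrite Rminus_0_r in HG1b; exact HG1b).
    assert (Hpk : forall j, s ^ j <= 1).
    { intros j. rewrite <- (pow1 j). apply pow_incr. lra. }
    assert (HDus : Rabs (Derive u s) <= A0).
    { rewrite HDu by lra. rewrite Rabs_mult, Rabs_right by (apply Rle_ge, Rlt_le, pw_pos).
      specialize (Hgs s ltac:(lra)).
      assert (Rpower (g s) (m - 1) <= A0) by (apply pw_anti; lra).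
      assert (0 < Rpower (g s) (m - 1)) by apply pw_pos.
      pose proof (Rabs_pos (G s)). nra. }
    assert (HIs : Rabs (Ii n gh s) <= s * (3 * eta0 / 2)).
    { assert (Hb := int_bound n gh s (3 * eta0 / 2) ltac:(lra) Hghc).
      assert (Hb' : Rabs (Ii n gh s / s ^ (n - 1)) <= s * (3 * eta0 / 2)).
      { apply Hb. intros t Ht. rewrite Hgh by lra. destruct (Req_dec t 0) as [->|Ht0].
        rewrite Hg0, Rabs_right; lra. specialize (Hgs t ltac:(lra)). rewrite Rabs_right; lra. }
      assert (Hsn : 0 < s ^ (n - 1)) by (apply pow_lt; lra).
      replace (Ii n gh s) with ((Ii n gh s / s ^ (n - 1)) * s ^ (n - 1)) by (field; lra).
      rewrite Rabs_mult, (Rabs_right (s ^ _)) by lra.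
      pose proof (Hpk (n - 1)%nat). pose proof (Rabs_pos (Ii n gh s / s ^ (n - 1))). nra. }
    unfold Psi. eapply Rle_lt_trans. apply Rabs_triang. eapply Rle_lt_trans.
    apply Rplus_le_compat_r. apply Rabs_triang. rewrite !Rabs_mult.
    rewrite (Rabs_right (s ^ _)) by (apply Rle_ge, pow_le; lra).
    rewrite (Rabs_right (s ^ S (S (S k)))) by (apply Rle_ge, pow_le; lra).
    specialize (Hgs s ltac:(lra)). rewrite (Rabs_right (g s)) by lra.
    assert (E1 : s ^ S (S k) * Rabs (Derive u s) <= s * A0).
    { change (s ^ S (S k)) with (s * s ^ S k). pose proof (Hpk (S k)).
      pose proof (pow_le s (S k) ltac:(lra)). pose proof (Rabs_pos (Derive u s)). assert (s ^ S k * Rabs (Derive u s) <= 1 * A0) by (apply Rmult_le_compat; lra). rewrite Rmult_assoc. apply Rmult_le_compat_l; lra. }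
    assert (E2 : Rabs beta * s ^ S (S (S k)) * g s <= s * (Rabs beta * (3 * eta0 / 2))).
    { change (s ^ S (S (S k))) with (s * s ^ S (S k)). pose proof (Hpk (S (S k))).
      pose proof (pow_le s (S (S k)) ltac:(lra)). pose proof (Rabs_pos beta).
      assert (s * s ^ S (S k) * g s <= s * (3 * eta0 / 2)).
      { apply Rmult_le_compat; nra. }
      nra. }
    assert (E3 : Rabs c * Rabs (Ii n gh s) <= s * (Rabs c * (3 * eta0 / 2))).
    { pose proof (Rabs_pos c). nra. }
    assert (s * C < e).
    { assert (Hse : s * (2 * C) <= e / 2).
      { unfold s. assert (Hrr : r * (2 * C) <= e / (2 * C) * (2 * C)) by (apply Rmult_le_compat_r; lra).
        replace (e / (2 * C) * (2 * C)) with e in Hrr by (field; lra). lra. }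
      lra. }
    unfold C in *. lra. }
  assert (HP0 : forall r, 0 < r < t1 -> Psi r = 0).
  { intros r Hr. destruct (Req_dec (Psi r) 0) as [|Hne]; auto.
    destruct (Hsmall (Rabs (Psi r)) ltac:(apply Rabs_pos_lt; auto)) as [r' [Hr' Hlt]].
    rewrite (HPc r' r) in Hlt by auto. lra. }
  intros r Hr. specialize (HP0 r Hr).
  assert (Hgr : 0 < g r) by (apply Hpos; lra).
  assert (HGr : G r = - (Rpower (g r) (1 - m) * Qf n beta c gh r)).
  { unfold Psi in HP0. rewrite HDu in HP0 by lra. unfold Qf. rewrite (Hgh r) by lra.
    assert (Hrn : 0 < r ^ S k) by (apply pow_lt; lra).
    replace (n - 1)%nat with (S (S k)) by (unfold n; lia).
    change (r ^ S (S k)) with (r * r ^ S k) in *. change (r ^ S (S (S k))) with (r * (r * r ^ S k)) in *.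
    assert (Hinv : Rpower (g r) (1 - m) * Rpower (g r) (m - 1) = 1) by (apply pw_inv; lra).
    assert (HGe : Rpower (g r) (m - 1) * G r = - (beta * r * g r + c * (Ii n gh r / (r * r ^ S k)))).
    { apply (Rmult_eq_reg_l (r * r ^ S k)); [|apply Rgt_not_eq; nra].
      replace (r * r ^ S k * - (beta * r * g r + c * (Ii n gh r / (r * r ^ S k)))) with
        (-(beta * (r * (r * r ^ S k)) * g r + c * Ii n gh r)) by (field; split; apply Rgt_not_eq; lra).
      lra. }
    replace (G r) with (Rpower (g r) (1 - m) * (Rpower (g r) (m - 1) * G r)) by (rewrite <- Rmult_assoc, Hinv; ring).
    rewrite HGe. ring. }
  rewrite clip_id by lra. fold gh. rewrite <- HGr.
  apply (is_derive_ext_loc g gh). apply (locally_open 0 t1); auto. intros y Hy. rewrite Hgh; auto; lra.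
  apply HG1; lra.
Qed.


Definition dQ k beta c (f : R -> R) (df : R) s :=
  beta * f s + beta * s * df +
  c * ((s ^ S (S k) * f s * s ^ S (S k) - Ii (S (S (S k))) f s * (INR (S (S k)) * s ^ S k)) / (s ^ S (S k)) ^ 2).

Lemma Qf_der k beta c (f : R -> R) s df : (forall z, continuous f z) -> s <> 0 -> is_derive f s df ->
  is_derive (Qf (S (S (S k))) beta c f) s (dQ k beta c f df s).
Proof.
  intros Hc Hs Hd.
  assert (HI : is_derive (Ii (S (S (S k))) f) s (s ^ S (S k) * f s)).
  { unfold Ii. apply (prim_der (fun t => t ^ (S (S (S k)) - 1) * f t) 0 s). apply cont_w; auto. }
  unfold Qf. simpl (S (S (S k)) - 1)%nat.
  auto_derive.
  - repeat split. eexists; exact Hd. eexists; exact HI. change (s * (s * s ^ k) <> 0) with (s ^ S (S k) <> 0). apply pow_nonzero; auto.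
  - change (fun x : R => f x) with f. change (fun x : R => Ii (S (S (S k))) f x) with (Ii (S (S (S k))) f).
    rewrite (is_derive_unique _ _ _ Hd), (is_derive_unique _ _ _ HI). unfold dQ.
    change (match k with | 0%nat => 1 | S _ => INR k + 1 end) with (INR (S k)).
    rewrite (S_INR (S k)). match goal with |- ?a = ?b => change (@eq R a b) end. change (s ^ S (S k)) with (s * (s * s ^ k)). change (s ^ S k) with (s * s ^ k). field. split; auto. change (s * (s * s ^ k) <> 0) with (s ^ S (S k) <> 0). apply pow_nonzero; auto.
Qed.

Lemma Ii_cont n (f : R -> R) s : (forall z, continuous f z) -> continuous (Ii n f) s.
Proof. intros Hc. unfold Ii. apply (prim_cont (fun t => t ^ (n - 1) * f t) 0 s). apply cont_w; auto. Qed.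

Lemma Qf_cont n beta c (f : R -> R) s : (forall z, continuous f z) -> s <> 0 -> continuous (Qf n beta c f) s.
Proof.
  intros Hc Hs. unfold Qf. apply cadd. apply cmul; auto. apply cmul. apply cconst. apply cid.
  apply cmul. apply cconst. apply cdiv. apply Ii_cont; auto. apply cpow, cid. apply pow_nonzero; auto.
Qed.

Lemma dQ_cont k beta c (f G : R -> R) s : (forall z, continuous f z) -> continuous G s -> s <> 0 ->
  continuous (fun x => dQ k beta c f (G x) x) s.
Proof.
  intros Hc HG Hs. unfold dQ. apply cadd. apply cadd. apply cmul; auto. apply cconst.
  apply cmul; auto. apply cmul. apply cconst. apply cid.
  apply cmul. apply cconst. apply cdiv. apply csub. apply cmul; [apply cmul|]; auto; apply cpow, cid.
  apply cmul. apply Ii_cont; auto. apply cmul. apply cconst. apply cpow, cid.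
  apply cpow, cpow, cid. apply pow_nonzero, pow_nonzero; auto.
Qed.

Lemma Qf_bound n beta c (f : R -> R) s B : 0 < s -> (forall z, continuous f z) ->
  (forall t, 0 <= t <= s -> Rabs (f t) <= B) -> Rabs (Qf n beta c f s) <= (Rabs beta + Rabs c) * s * B.
Proof.
  intros Hs Hc Hb. unfold Qf. eapply Rle_trans. apply Rabs_triang. rewrite !Rabs_mult.
  pose proof (int_bound n f s B Hs Hc Hb). rewrite (Rabs_right s) by lra.
  specialize (Hb s ltac:(lra)). pose proof (Rabs_pos beta). pose proof (Rabs_pos c).
  assert (Rabs beta * s * Rabs (f s) <= Rabs beta * s * B) by (apply Rmult_le_compat_l; nra).
  assert (Rabs c * Rabs (Ii n f s / s ^ (n - 1)) <= Rabs c * (s * B)) by (apply Rmult_le_compat_l; nra).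
  nra.
Qed.


Lemma is_derive_oppR (f : R -> R) x l : is_derive f x l -> is_derive (fun y => - f y) x (- l).
Proof. intros H. exact (is_derive_opp (K := R_AbsRing) (V := R_NormedModule) f x l H). Qed.

Lemma id_to_sol n m alpha beta eta0 eps (phi : R -> R) :
  (3 <= n)%nat -> 0 < m < 1 -> 0 < eta0 -> 0 < eps ->
  (forall z, continuous phi z) -> phi 0 = eta0 ->
  (forall r, 0 <= r < eps -> eta0 / 2 <= phi r <= 2 * eta0) ->
  (forall r, 0 < r < eps -> is_derive phi r (- (Rpower (phi r) (1 - m) * Qf n beta (alpha - INR n * beta) phi r))) ->
  radial_sol n m alpha beta eta0 eps phi.
Proof.
  intros Hn Hm Heta Heps Hc H0 Hb Hd.
  destruct n as [|[|[|k]]]; try lia. set (n := S (S (S k))) in *.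
  set (c := alpha - INR n * beta) in *.
  set (G := fun r => - (Rpower (phi r) (1 - m) * Qf n beta c phi r)) in *.
  set (K := Rpower (2 * eta0) (1 - m) * ((Rabs beta + Rabs c) * (2 * eta0))).
  assert (HK : 0 <= K).
  { unfold K. pose proof (pw_pos (2 * eta0) (1 - m)). pose proof (Rabs_pos beta). pose proof (Rabs_pos c).
    apply Rmult_le_pos; nra. }
  assert (HG0 : G 0 = 0) by (unfold G; rewrite Qf0; ring).
  assert (HGb : forall s, 0 <= s < eps -> Rabs (G s) <= K * s).
  { intros s Hs. destruct (Req_dec s 0) as [->|Hs0]. rewrite HG0, Rabs_R0. lra.
    unfold G. rewrite Rabs_Ropp, Rabs_mult, (Rabs_right (Rpower _ _)) by (apply Rle_ge, Rlt_le, pw_pos).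
    pose proof (Qf_bound n beta c phi s (2 * eta0) ltac:(lra) Hc) as HQ.
    assert (HQ' : Rabs (Qf n beta c phi s) <= (Rabs beta + Rabs c) * s * (2 * eta0)).
    { apply HQ. intros t Ht. specialize (Hb t ltac:(lra)). rewrite Rabs_right; lra. }
    assert (Rpower (phi s) (1 - m) <= Rpower (2 * eta0) (1 - m)).
    { apply pw_mono. lra. specialize (Hb s ltac:(lra)). lra. }
    pose proof (pw_pos (phi s) (1 - m)). pose proof (Rabs_pos (Qf n beta c phi s)).
    pose proof (Rabs_pos beta). pose proof (Rabs_pos c).
    unfold K. replace (Rpower (2 * eta0) (1 - m) * ((Rabs beta + Rabs c) * (2 * eta0)) * s) with
      (Rpower (2 * eta0) (1 - m) * ((Rabs beta + Rabs c) * s * (2 * eta0))) by ring.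
    apply Rmult_le_compat; lra. }
  assert (Hpos : forall r, 0 <= r < eps -> 0 < phi r) by (intros r Hr; specialize (Hb r Hr); lra).
  assert (HDp : forall r, 0 < r < eps -> Derive phi r = G r) by (intros; apply is_derive_unique; apply Hd; auto).
  assert (HGc : forall r, 0 < r < eps -> continuous G r).
  { intros r Hr. unfold G. apply copp. apply cmul. apply cpw; auto. apply Hpos; lra.
    apply Qf_cont; auto. lra. }
  set (G2 := fun r => - ((1 - m) * Rpower (phi r) (1 - m - 1) * G r * Qf n beta c phi r
                         + Rpower (phi r) (1 - m) * dQ k beta c phi (G r) r)).
  assert (HG2 : forall r, 0 < r < eps -> is_derive G r (G2 r)).
  { intros r Hr. unfold G, G2. apply is_derive_oppR.
    apply (is_derive_mult (fun x => Rpower (phi x) (1 - m)) (Qf n beta c phi)).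
    apply der_pwc. apply Hpos; lra. apply Hd; auto.
    apply Qf_der; auto. lra. intros; apply Rmult_comm. }
  assert (HG2c : forall r, 0 < r < eps -> continuous G2 r).
  { intros r Hr. unfold G2. apply copp. apply cadd. apply cmul. apply cmul. apply cmul. apply cconst.
    apply cpw; auto. apply Hpos; lra. apply HGc; auto. apply Qf_cont; auto; lra.
    apply cmul. apply cpw; auto. apply Hpos; lra. apply dQ_cont; auto. lra. }
  split; [|split; [|split; [|split]]].
  - exists G. split; [|exact HG0]. split; [|split; [|split]].
    + exact Hd.
    + rewrite HG0. apply right_ed. intros e He.
      exists (Rmin eps (e / (K + 1))). split. apply Rmin_glb_lt; auto. apply Rdiv_lt_0_compat; lra.
      intros h [Hh1 Hh2]. pose proof (Rmin_l eps (e / (K + 1))). pose proof (Rmin_r eps (e / (K + 1))).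
      destruct (MVT_gen phi 0 h G) as [xi [Hxi Heq]].
      * rewrite Rmin_left, Rmax_right by lra. intros; apply Hd; lra.
      * intros; apply cont_pt; auto.
      * rewrite Rmin_left, Rmax_right in Hxi by lra.
        replace ((phi h - phi 0) / h - 0) with (G xi) by (rewrite Heq; field; lra).
        eapply Rle_lt_trans. apply HGb; lra.
        assert (K * xi <= K * h) by (apply Rmult_le_compat_l; lra).
        assert (h * (K + 1) < e).
        { apply (Rmult_lt_reg_r (/ (K + 1))). apply Rinv_0_lt_compat; lra.
          rewrite Rmult_assoc, Rinv_r by lra. unfold Rdiv in *. lra. }
        nra.
    + exact HGc.
    + rewrite HG0. apply right_ed. intros e He.
      exists (Rmin eps (e / (K + 1))). split. apply Rmin_glb_lt; auto. apply Rdiv_lt_0_compat; lra.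
      intros h [Hh1 Hh2]. pose proof (Rmin_l eps (e / (K + 1))). pose proof (Rmin_r eps (e / (K + 1))).
      rewrite Rminus_0_r. eapply Rle_lt_trans. apply HGb; lra.
      assert (h * (K + 1) < e).
      { apply (Rmult_lt_reg_r (/ (K + 1))). apply Rinv_0_lt_compat; lra.
        rewrite Rmult_assoc, Rinv_r by lra. unfold Rdiv in *. lra. }
      nra.
  - intros r Hr.
    assert (Hloc : locally r (fun y => G y = Derive phi y)).
    { apply (locally_open 0 eps); auto. intros; rewrite HDp; auto. }
    split.
    + simpl. apply (ex_derive_ext_loc G). exact Hloc. eexists; apply HG2; auto.
    + apply (continuous_ext_loc _ G2); [|apply HG2c; auto].
      apply (locally_open 0 eps); auto. intros y Hy.
      change (G2 y = Derive (Derive phi) y).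
      assert (Hl2 : locally y (fun t => Derive phi t = G t)) by (apply (locally_open 0 eps); auto; intros; apply HDp; auto).
      rewrite (Derive_ext_loc _ _ y Hl2). symmetry. apply is_derive_unique, HG2; auto.
  - exact Hpos.
  - exact H0.
  - intros r Hr. cbv zeta. set (u := fun s => Rpower (phi s) m / m).
    assert (HDu : forall s, 0 < s < eps -> Derive u s = - Qf n beta c phi s).
    { intros s Hs. apply is_derive_unique.
      apply (is_derive_ext (fun x => / m * Rpower (phi x) m) u). { intros; unfold u, Rdiv; apply Rmult_comm. }
      replace (- Qf n beta c phi s) with (/ m * (m * Rpower (phi s) (m - 1) * G s)).
      apply is_derive_scal. apply der_pwc. apply Hpos; lra. apply Hd; auto.
      assert (Hinv : Rpower (phi s) (m - 1) * Rpower (phi s) (1 - m) = 1) by (apply pw_inv; [apply Hpos; lra| ring]).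
      unfold G. replace (/ m * (m * Rpower (phi s) (m - 1) * - (Rpower (phi s) (1 - m) * Qf n beta c phi s)))
        with (- (Rpower (phi s) (m - 1) * Rpower (phi s) (1 - m)) * Qf n beta c phi s) by (field; lra).
      rewrite Hinv. ring. }
    assert (HD2 : Derive_n u 2 r = - dQ k beta c phi (G r) r).
    { change (Derive (Derive u) r = - dQ k beta c phi (G r) r).
      assert (Hl : locally r (fun s => Derive u s = - Qf n beta c phi s)) by (apply (locally_open 0 eps); auto).
      rewrite (Derive_ext_loc _ _ r Hl).
      apply is_derive_unique. apply is_derive_oppR. apply Qf_der; [auto | lra | apply Hd; auto]. }
    rewrite HD2, HDu, HDp by auto. unfold dQ, Qf. unfold n. simpl (S (S (S k)) - 1)%nat.
    unfold c. unfold n. rewrite !S_INR.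
    change (r ^ S (S k)) with (r * (r * r ^ k)). change (r ^ S k) with (r * r ^ k).
    field. split. apply pow_nonzero; lra. lra.
Qed.


Lemma clip_c a b x : a <= b -> continuous (clip a b) x.
Proof.
  intros Hab. apply (continuous_ext (fun y => (fun z => z) (clip a b y))). intros; reflexivity.
  apply (clip_cont (fun z => z)); auto. intros; apply wcont_of_cont, cid.
Qed.

Definition Cl e0 (psi : R -> R) t := clip (e0 / 2) (2 * e0) (psi t).
Definition Nm n beta c p e0 (psi : R -> R) s := Rpower (Cl e0 psi s) p * Qf n beta c (Cl e0 psi) (Rabs s).
Definition Tm n beta c p e0 ep (psi : R -> R) r := e0 - RInt (Nm n beta c p e0 psi) 0 (clip 0 ep r).

Lemma Cl_cont e0 psi : 0 < e0 -> (forall z, continuous psi z) -> forall z, continuous (Cl e0 psi) z.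
Proof. intros He Hc z. unfold Cl. apply ccomp; auto. apply clip_c. lra. Qed.

Lemma Cl_range e0 psi t : 0 < e0 -> e0 / 2 <= Cl e0 psi t <= 2 * e0.
Proof. intros; unfold Cl; apply clip_in; lra. Qed.

Lemma Cl_abs e0 psi t : 0 < e0 -> Rabs (Cl e0 psi t) <= 2 * e0.
Proof. intros He. pose proof (Cl_range e0 psi t He). rewrite Rabs_right; lra. Qed.

Lemma Nm_bound n beta c p e0 psi s : 0 < e0 -> 0 < p -> (forall z, continuous psi z) ->
  Rabs (Nm n beta c p e0 psi s) <= Rpower (2 * e0) p * ((Rabs beta + Rabs c) * Rabs s * (2 * e0)).
Proof.
  intros He Hp Hc. unfold Nm. rewrite Rabs_mult, (Rabs_right (Rpower _ _)) by (apply Rle_ge, Rlt_le, pw_pos).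
  assert (HA : Rpower (Cl e0 psi s) p <= Rpower (2 * e0) p).
  { apply pw_mono. lra. pose proof (Cl_range e0 psi s He). lra. }
  assert (HQ : Rabs (Qf n beta c (Cl e0 psi) (Rabs s)) <= (Rabs beta + Rabs c) * Rabs s * (2 * e0)).
  { destruct (Req_dec s 0) as [->|Hs]. rewrite Rabs_R0, Qf0, Rabs_R0. lra.
    apply Qf_bound. apply Rabs_pos_lt; auto. apply Cl_cont; auto. intros; apply Cl_abs; auto. }
  pose proof (pw_pos (Cl e0 psi s) p). pose proof (Rabs_pos (Qf n beta c (Cl e0 psi) (Rabs s))).
  apply Rmult_le_compat; lra.
Qed.

Lemma Nm_cont n beta c p e0 psi : 0 < e0 -> 0 < p -> (forall z, continuous psi z) -> forall s, continuous (Nm n beta c p e0 psi) s.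
Proof.
  intros He Hp Hc s. destruct (Req_dec s 0) as [->|Hs].
  - apply cont_ed. intros e Hee.
    set (K := Rpower (2 * e0) p * ((Rabs beta + Rabs c) * (2 * e0))).
    assert (HK : 0 <= K).
    { unfold K. pose proof (pw_pos (2 * e0) p). pose proof (Rabs_pos beta). pose proof (Rabs_pos c). apply Rmult_le_pos; nra. }
    exists (e / (K + 1)). split. apply Rdiv_lt_0_compat; lra.
    intros y Hy. unfold Nm at 2. rewrite Rabs_R0, Qf0, Rmult_0_r, Rminus_0_r. rewrite Rminus_0_r in Hy.
    eapply Rle_lt_trans. apply Nm_bound; auto.
    replace (Rpower (2 * e0) p * ((Rabs beta + Rabs c) * Rabs y * (2 * e0))) with (K * Rabs y) by (unfold K; ring).
    assert (Rabs y * (K + 1) < e).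
    { apply (Rmult_lt_reg_r (/ (K + 1))). apply Rinv_0_lt_compat; lra.
      rewrite Rmult_assoc, Rinv_r by lra. unfold Rdiv in *. lra. }
    pose proof (Rabs_pos y). nra.
  - unfold Nm. apply cmul. apply cpw. apply Cl_cont; auto. pose proof (Cl_range e0 psi s He); lra.
    apply (ccomp Rabs (Qf n beta c (Cl e0 psi))). apply cabs, cid. apply Qf_cont. apply Cl_cont; auto.
    apply Rabs_no_R0; auto.
Qed.

Lemma Tm_cont n beta c p e0 ep psi : 0 < e0 -> 0 < p -> 0 < ep -> (forall z, continuous psi z) ->
  forall z, continuous (Tm n beta c p e0 ep psi) z.
Proof.
  intros He Hp Hep Hc z. unfold Tm. apply csub. apply cconst.
  apply (ccomp (clip 0 ep) (fun y => RInt (Nm n beta c p e0 psi) 0 y)). apply clip_c; lra.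
  apply prim_cont. apply Nm_cont; auto.
Qed.

Definition L0 beta c p e0 := Rpower (2 * e0) p * (Rabs beta + Rabs c) + (Rabs beta + Rabs c) * (2 * e0) * Rpower (e0 / 2) (p - 1).

Lemma L0_pos beta c p e0 : 0 < e0 -> 0 <= L0 beta c p e0.
Proof.
  intros He. unfold L0. pose proof (pw_pos (2 * e0) p). pose proof (pw_pos (e0/2) (p-1)).
  pose proof (Rabs_pos beta). pose proof (Rabs_pos c).
  apply Rplus_le_le_0_compat; repeat apply Rmult_le_pos; lra.
Qed.

Lemma Nm_lip n beta c p e0 ep psi1 psi2 D s : 0 < e0 -> 0 < p < 1 -> 0 < ep ->
  (forall z, continuous psi1 z) -> (forall z, continuous psi2 z) ->
  (forall t, 0 <= t <= ep -> Rabs (psi1 t - psi2 t) <= D) -> 0 <= s <= ep ->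
  Rabs (Nm n beta c p e0 psi1 s - Nm n beta c p e0 psi2 s) <= ep * L0 beta c p e0 * D.
Proof.
  intros He Hp Hep Hc1 Hc2 HD Hs.
  assert (HD0 : 0 <= D) by (eapply Rle_trans; [apply Rabs_pos|apply (HD 0); lra]).
  pose proof (L0_pos beta c p e0 He) as HL0.
  destruct (Req_dec s 0) as [->|Hs0].
  { unfold Nm. rewrite Rabs_R0, !Qf0, !Rmult_0_r, Rminus_0_r, Rabs_R0. apply Rmult_le_pos; nra. }
  assert (Hsp : 0 < s) by lra. unfold Nm. rewrite (Rabs_right s) by lra.
  set (f1 := Cl e0 psi1). set (f2 := Cl e0 psi2).
  assert (Hf1 : forall z, continuous f1 z) by (apply Cl_cont; auto).
  assert (Hf2 : forall z, continuous f2 z) by (apply Cl_cont; auto).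
  assert (Hd : forall t, 0 <= t <= ep -> Rabs (f1 t - f2 t) <= D).
  { intros t Ht. unfold f1, f2, Cl. eapply Rle_trans. apply clip_lip. lra. apply HD; lra. }
  set (A1 := Rpower (f1 s) p). set (A2 := Rpower (f2 s) p).
  set (Q1 := Qf n beta c f1 s). set (Q2 := Qf n beta c f2 s).
  assert (HQd : Rabs (Q1 - Q2) <= (Rabs beta + Rabs c) * s * D).
  { assert (Hxn : 0 < s ^ (n - 1)) by (apply pow_lt; lra).
    replace (Q1 - Q2) with (beta * s * (f1 s - f2 s) + c * (Ii n (fun t => f1 t - f2 t) s / s ^ (n - 1)))
      by (unfold Q1, Q2, Qf; rewrite <- Ii_minus by auto; field; lra).
    eapply Rle_trans. apply Rabs_triang. rewrite !Rabs_mult, (Rabs_right s) by lra.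
    pose proof (int_bound n (fun t => f1 t - f2 t) s D Hsp ltac:(intros; apply csub; auto) ltac:(intros t Ht; apply Hd; lra)) as Hib.
    pose proof (Hd s ltac:(lra)) as Hds. pose proof (Rabs_pos beta). pose proof (Rabs_pos c).
    assert (Rabs beta * s * Rabs (f1 s - f2 s) <= Rabs beta * s * D) by (apply Rmult_le_compat_l; [apply Rmult_le_pos|]; lra).
    assert (Rabs c * Rabs (Ii n (fun t => f1 t - f2 t) s / s ^ (n - 1)) <= Rabs c * (s * D)) by (apply Rmult_le_compat_l; [lra| exact Hib]).
    lra. }
  assert (HA1 : 0 < A1 <= Rpower (2 * e0) p).
  { split. apply pw_pos. apply pw_mono. lra. pose proof (Cl_range e0 psi1 s He). fold f1 in H. lra. }
  assert (HQ2 : Rabs Q2 <= (Rabs beta + Rabs c) * s * (2 * e0)).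
  { apply Qf_bound; auto. intros; apply Cl_abs; auto. }
  assert (HAd : Rabs (A1 - A2) <= D * Rpower (e0 / 2) (p - 1)).
  { pose proof (Cl_range e0 psi1 s He). pose proof (Cl_range e0 psi2 s He). fold f1 f2 in H, H0.
    eapply Rle_trans. apply pw_ineq; lra. apply Rmult_le_compat. apply Rabs_pos. apply Rlt_le, pw_pos.
    apply Hd; lra. apply pw_anti. lra. split. lra. eapply Rle_trans; [|apply Rmax_l]. lra. }
  replace (A1 * Q1 - A2 * Q2) with (A1 * (Q1 - Q2) + Q2 * (A1 - A2)) by ring.
  eapply Rle_trans. apply Rabs_triang. rewrite !Rabs_mult, (Rabs_right A1) by lra.
  assert (H1 : A1 * Rabs (Q1 - Q2) <= Rpower (2 * e0) p * ((Rabs beta + Rabs c) * s * D)).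
  { apply Rmult_le_compat; try lra. apply Rabs_pos. }
  assert (H2 : Rabs Q2 * Rabs (A1 - A2) <= (Rabs beta + Rabs c) * s * (2 * e0) * (D * Rpower (e0 / 2) (p - 1))).
  { apply Rmult_le_compat; auto; apply Rabs_pos. }
  assert (H3 : s * L0 beta c p e0 * D <= ep * L0 beta c p e0 * D).
  { apply Rmult_le_compat_r; auto. apply Rmult_le_compat_r; auto. lra. }
  unfold L0 in *. nra.
Qed.

Lemma Tm_contr n beta c p e0 ep psi1 psi2 D r : 0 < e0 -> 0 < p < 1 -> 0 < ep ->
  (forall z, continuous psi1 z) -> (forall z, continuous psi2 z) ->
  (forall t, 0 <= t <= ep -> Rabs (psi1 t - psi2 t) <= D) ->
  Rabs (Tm n beta c p e0 ep psi1 r - Tm n beta c p e0 ep psi2 r) <= ep * (ep * L0 beta c p e0 * D).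
Proof.
  intros He Hp Hep Hc1 Hc2 HD. unfold Tm.
  assert (Hx := clip_in 0 ep r ltac:(lra)). set (x := clip 0 ep r) in *.
  assert (HD0 : 0 <= D) by (eapply Rle_trans; [apply Rabs_pos|apply (HD 0); lra]).
  pose proof (L0_pos beta c p e0 He).
  replace (e0 - RInt (Nm n beta c p e0 psi1) 0 x - (e0 - RInt (Nm n beta c p e0 psi2) 0 x))
    with (- (RInt (fun s => Nm n beta c p e0 psi1 s - Nm n beta c p e0 psi2 s) 0 x)).
  2:{ rewrite RInt_minusR. ring. apply exRI, Nm_cont; auto; lra. apply exRI, Nm_cont; auto; lra. }
  rewrite Rabs_Ropp. eapply Rle_trans. apply abs_RInt_le_const. lra.
  apply exRI. intros; apply csub; apply Nm_cont; auto; lra.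
  intros t Ht. apply (Nm_lip n beta c p e0 ep); auto; lra.
  apply Rmult_le_compat_r. apply Rmult_le_pos; [apply Rmult_le_pos|]; lra. lra.
Qed.

Definition M0 beta c p e0 := Rpower (2 * e0) p * ((Rabs beta + Rabs c) * (2 * e0)).

Lemma M0_pos beta c p e0 : 0 < e0 -> 0 <= M0 beta c p e0.
Proof.
  intros He. unfold M0. pose proof (pw_pos (2 * e0) p). pose proof (Rabs_pos beta). pose proof (Rabs_pos c).
  apply Rmult_le_pos; nra.
Qed.

Lemma Tm_range n beta c p e0 ep psi r : 0 < e0 -> 0 < p < 1 -> 0 < ep -> (forall z, continuous psi z) ->
  Rabs (Tm n beta c p e0 ep psi r - e0) <= ep * (ep * M0 beta c p e0).
Proof.
  intros He Hp Hep Hc. unfold Tm.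
  assert (Hx := clip_in 0 ep r ltac:(lra)). set (x := clip 0 ep r) in *.
  pose proof (M0_pos beta c p e0 He).
  replace (e0 - RInt (Nm n beta c p e0 psi) 0 x - e0) with (- RInt (Nm n beta c p e0 psi) 0 x) by ring.
  rewrite Rabs_Ropp. eapply Rle_trans. apply (abs_RInt_le_const _ 0 x (ep * M0 beta c p e0)). lra. apply exRI, Nm_cont; auto; lra.
  intros t Ht. eapply Rle_trans. apply Nm_bound; auto; lra.
  replace (Rpower (2 * e0) p * ((Rabs beta + Rabs c) * Rabs t * (2 * e0))) with (Rabs t * M0 beta c p e0) by (unfold M0; ring).
  rewrite (Rabs_right t) by lra. apply Rmult_le_compat_r; lra.
  apply Rmult_le_compat_r. apply Rmult_le_pos; lra. lra.
Qed.


Fixpoint it n beta c p e0 ep (k : nat) : R -> R :=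
  match k with
  | O => fun _ => e0
  | S k' => Tm n beta c p e0 ep (it n beta c p e0 ep k')
  end.


Lemma it_cont n beta c p e0 ep k : 0 < e0 -> 0 < p < 1 -> 0 < ep -> forall z, continuous (it n beta c p e0 ep k) z.
Proof.
  intros He Hp Hep. induction k; simpl; intros z. apply cconst. apply Tm_cont; auto; lra.
Qed.

Lemma it_step n beta c p e0 ep k : 0 < e0 -> 0 < p < 1 -> 0 < ep ->
  ep * (ep * L0 beta c p e0) <= 1 / 2 -> ep * (ep * M0 beta c p e0) <= e0 / 2 ->
  forall r, Rabs (it n beta c p e0 ep (S k) r - it n beta c p e0 ep k r) <= e0 / 2 * (1 / 2) ^ k.
Proof.
  intros He Hp Hep H1 H2. induction k; intros r.
  - simpl. rewrite Rmult_1_r. eapply Rle_trans. apply Tm_range; auto. intros; apply cconst. auto.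
  - change (it n beta c p e0 ep (S (S k)) r) with (Tm n beta c p e0 ep (it n beta c p e0 ep (S k)) r).
    eapply Rle_trans. apply (Tm_contr n beta c p e0 ep _ _ (e0 / 2 * (1 / 2) ^ k)); auto.
    apply it_cont; auto. apply it_cont; auto.
    pose proof (pow_le (1/2) k ltac:(lra)). pose proof (L0_pos beta c p e0 He).
    replace (ep * (ep * L0 beta c p e0 * (e0 / 2 * (1 / 2) ^ k))) with (ep * (ep * L0 beta c p e0) * (e0 / 2 * (1 / 2) ^ k)) by ring.
    simpl. apply Rle_trans with (1/2 * (e0 / 2 * (1 / 2) ^ k)). apply Rmult_le_compat_r; nra. lra.
Qed.

Lemma it_cauchy n beta c p e0 ep k j : 0 < e0 -> 0 < p < 1 -> 0 < ep ->
  ep * (ep * L0 beta c p e0) <= 1 / 2 -> ep * (ep * M0 beta c p e0) <= e0 / 2 ->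
  forall r, Rabs (it n beta c p e0 ep (j + k) r - it n beta c p e0 ep k r) <= e0 * (1 / 2) ^ k * (1 - (1/2) ^ j).
Proof.
  intros He Hp Hep H1 H2. induction j; intros r.
  - simpl. rewrite Rminus_diag, Rabs_R0. lra.
  - replace (it n beta c p e0 ep (S j + k) r - it n beta c p e0 ep k r) with
      ((it n beta c p e0 ep (S (j + k)) r - it n beta c p e0 ep (j + k) r) + (it n beta c p e0 ep (j + k) r - it n beta c p e0 ep k r)) by (simpl; ring).
    eapply Rle_trans. apply Rabs_triang.
    pose proof (it_step n beta c p e0 ep (j + k) He Hp Hep H1 H2 r). pose proof (IHj r).
    rewrite pow_add in H. replace ((1/2)^(S j)) with ((1/2) * (1/2)^j) by reflexivity. set (a := (1/2)^j) in *. set (b := (1/2)^k) in *. replace (Rabs (it n beta c p e0 ep (S (j + k)) r - it n beta c p e0 ep (j + k) r) + Rabs (it n beta c p e0 ep (j + k) r - it n beta c p e0 ep k r)) with (Rabs (it n beta c p e0 ep (S (j + k)) r - it n beta c p e0 ep (j + k) r) + Rabs (it n beta c p e0 ep (j + k) r - it n beta c p e0 ep k r)) by reflexivity. lra.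
Qed.

Lemma it_cauchy' n beta c p e0 ep k j : 0 < e0 -> 0 < p < 1 -> 0 < ep ->
  ep * (ep * L0 beta c p e0) <= 1 / 2 -> ep * (ep * M0 beta c p e0) <= e0 / 2 ->
  forall r, Rabs (it n beta c p e0 ep (j + k) r - it n beta c p e0 ep k r) <= e0 * (1 / 2) ^ k.
Proof.
  intros. eapply Rle_trans. apply it_cauchy; auto.
  pose proof (pow_le (1/2) j ltac:(lra)). pose proof (pow_le (1/2) k ltac:(lra)).
  assert (e0 * (1/2)^k * (1 - (1/2)^j) <= e0 * (1/2)^k * 1). apply Rmult_le_compat_l. nra. lra. lra.
Qed.


Lemma abs_le_inv a b : Rabs a <= b -> - b <= a <= b.
Proof. unfold Rabs; destruct Rcase_abs; lra. Qed.

Definition phil n beta c p e0 ep r := real (Lim_seq (fun k => it n beta c p e0 ep k r)).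

Lemma phil_lim n beta c p e0 ep r : 0 < e0 -> 0 < p < 1 -> 0 < ep ->
  ep * (ep * L0 beta c p e0) <= 1 / 2 -> ep * (ep * M0 beta c p e0) <= e0 / 2 ->
  is_lim_seq (fun k => it n beta c p e0 ep k r) (phil n beta c p e0 ep r).
Proof.
  intros He Hp Hep H1 H2.
  assert (Hex : ex_finite_lim_seq (fun k => it n beta c p e0 ep k r)).
  { apply ex_lim_seq_cauchy_corr. intros [eps Heps].
    destruct (pow_lt_1_zero (1/2) ltac:(rewrite Rabs_right; lra) (eps / (2 * e0))) as [N HN].
    apply Rdiv_lt_0_compat; lra.
    exists N. intros a b Ha Hb. simpl.
    pose proof (it_cauchy' n beta c p e0 ep N (a - N) He Hp Hep H1 H2 r) as Ca.
    pose proof (it_cauchy' n beta c p e0 ep N (b - N) He Hp Hep H1 H2 r) as Cb.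
    replace (a - N + N)%nat with a in Ca by lia. replace (b - N + N)%nat with b in Cb by lia.
    specialize (HN N (Nat.le_refl _)). rewrite Rabs_right in HN by (apply Rle_ge, pow_le; lra).
    replace (it n beta c p e0 ep a r - it n beta c p e0 ep b r) with
      ((it n beta c p e0 ep a r - it n beta c p e0 ep N r) - (it n beta c p e0 ep b r - it n beta c p e0 ep N r)) by ring.
    assert (e0 * (1 / 2) ^ N < e0 * (eps / (2 * e0))) by (apply Rmult_lt_compat_l; lra).
    replace (e0 * (eps / (2 * e0))) with (eps / 2) in H by (field; lra).
    apply abs_le_inv in Ca. apply abs_le_inv in Cb. apply Rabs_def1; lra. }
  destruct Hex as [l Hl]. unfold phil. rewrite (is_lim_seq_unique _ _ Hl). simpl. exact Hl.
Qed.

Lemma phil_close n beta c p e0 ep k r : 0 < e0 -> 0 < p < 1 -> 0 < ep ->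
  ep * (ep * L0 beta c p e0) <= 1 / 2 -> ep * (ep * M0 beta c p e0) <= e0 / 2 ->
  Rabs (phil n beta c p e0 ep r - it n beta c p e0 ep k r) <= e0 * (1 / 2) ^ k.
Proof.
  intros He Hp Hep H1 H2.
  pose proof (phil_lim n beta c p e0 ep r He Hp Hep H1 H2) as Hl.
  apply (is_lim_seq_incr_n _ k) in Hl.
  set (B := e0 * (1 / 2) ^ k).
  assert (Hu : Rbar_le (phil n beta c p e0 ep r) (it n beta c p e0 ep k r + B)).
  { eapply is_lim_seq_le; [|exact Hl| apply is_lim_seq_const]. intros j.
    pose proof (it_cauchy' n beta c p e0 ep k j He Hp Hep H1 H2 r). apply abs_le_inv in H. simpl. unfold B. lra. }
  assert (Hd : Rbar_le (it n beta c p e0 ep k r - B) (phil n beta c p e0 ep r)).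
  { eapply is_lim_seq_le; [|apply is_lim_seq_const| exact Hl]. intros j.
    pose proof (it_cauchy' n beta c p e0 ep k j He Hp Hep H1 H2 r). apply abs_le_inv in H. simpl. unfold B. lra. }
  simpl in Hu, Hd. apply Rabs_le. lra.
Qed.


Lemma small_pow e0 e : 0 < e0 -> 0 < e -> exists k, e0 * (1 / 2) ^ k < e.
Proof.
  intros He Hee. destruct (pow_lt_1_zero (1/2) ltac:(rewrite Rabs_right; lra) (e / e0)) as [N HN].
  apply Rdiv_lt_0_compat; lra.
  exists N. specialize (HN N (Nat.le_refl _)). rewrite Rabs_right in HN by (apply Rle_ge, pow_le; lra).
  apply (Rmult_lt_compat_l e0) in HN; auto. replace (e0 * (e / e0)) with e in HN by (field; lra). lra.
Qed.

Lemma phil_cont n beta c p e0 ep : 0 < e0 -> 0 < p < 1 -> 0 < ep ->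
  ep * (ep * L0 beta c p e0) <= 1 / 2 -> ep * (ep * M0 beta c p e0) <= e0 / 2 ->
  forall z, continuous (phil n beta c p e0 ep) z.
Proof.
  intros He Hp Hep H1 H2 z. apply cont_ed. intros e Hee.
  destruct (small_pow e0 (e / 3) He ltac:(lra)) as [k Hk].
  destruct (ed_cont _ z (it_cont n beta c p e0 ep k He Hp Hep z) (e / 3) ltac:(lra)) as [d [Hd Hy]].
  exists d. split; auto. intros y Hyz. specialize (Hy y Hyz).
  pose proof (phil_close n beta c p e0 ep k y He Hp Hep H1 H2).
  pose proof (phil_close n beta c p e0 ep k z He Hp Hep H1 H2).
  apply abs_le_inv in H. apply abs_le_inv in H0. apply Rabs_def2 in Hy. apply Rabs_def1; lra.
Qed.

Lemma phil_fix n beta c p e0 ep r : 0 < e0 -> 0 < p < 1 -> 0 < ep ->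
  ep * (ep * L0 beta c p e0) <= 1 / 2 -> ep * (ep * M0 beta c p e0) <= e0 / 2 ->
  Tm n beta c p e0 ep (phil n beta c p e0 ep) r = phil n beta c p e0 ep r.
Proof.
  intros He Hp Hep H1 H2.
  assert (Hb : forall k, Rabs (Tm n beta c p e0 ep (phil n beta c p e0 ep) r - phil n beta c p e0 ep r) <= e0 * (1/2)^k).
  { intros k.
    assert (Ha : Rabs (Tm n beta c p e0 ep (phil n beta c p e0 ep) r - Tm n beta c p e0 ep (it n beta c p e0 ep k) r)
                 <= ep * (ep * L0 beta c p e0 * (e0 * (1/2)^k))).
    { apply Tm_contr; auto. apply phil_cont; auto. apply it_cont; auto.
      intros t _. apply phil_close; auto. }
    pose proof (phil_close n beta c p e0 ep (S k) r He Hp Hep H1 H2) as Hc. rewrite <- tech_pow_Rmult in Hc.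
    change (Tm n beta c p e0 ep (it n beta c p e0 ep k) r) with (it n beta c p e0 ep (S k) r) in Ha.
    pose proof (pow_le (1/2) k ltac:(lra)). pose proof (L0_pos beta c p e0 He).
    assert (ep * (ep * L0 beta c p e0 * (e0 * (1/2)^k)) <= 1/2 * (e0 * (1/2)^k)).
    { replace (ep * (ep * L0 beta c p e0 * (e0 * (1/2)^k))) with (ep * (ep * L0 beta c p e0) * (e0 * (1/2)^k)) by ring.
      apply Rmult_le_compat_r; nra. }
    apply abs_le_inv in Ha. apply abs_le_inv in Hc. apply Rabs_le. lra. }
  destruct (Req_dec (Tm n beta c p e0 ep (phil n beta c p e0 ep) r - phil n beta c p e0 ep r) 0) as [E|E]. lra.
  destruct (small_pow e0 _ He (Rabs_pos_lt _ E)) as [k Hk]. specialize (Hb k). lra.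
Qed.

Lemma Qf_ext n beta c (f g : R -> R) s : (forall t, f t = g t) -> Qf n beta c f s = Qf n beta c g s.
Proof.
  intros H. unfold Qf, Ii. rewrite H. f_equal. f_equal. f_equal. apply RInt_ext. intros; rewrite H; auto.
Qed.

Lemma exist_sol n beta c p e0 : 0 < e0 -> 0 < p < 1 ->
  exists ep, 0 < ep /\ exists phi : R -> R,
    (forall z, continuous phi z) /\ phi 0 = e0 /\ (forall r, e0 / 2 <= phi r <= 2 * e0) /\
    (forall r, 0 < r < ep -> is_derive phi r (- (Rpower (phi r) p * Qf n beta c phi r))).
Proof.
  intros He Hp.
  set (L := L0 beta c p e0). set (M := M0 beta c p e0).
  pose proof (L0_pos beta c p e0 He) as HL. pose proof (M0_pos beta c p e0 He) as HM. fold L M in HL, HM.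
  set (ep := Rmin 1 (Rmin (1 / (2 * L + 2)) (e0 / (2 * M + 2)))).
  assert (Hep1 : ep <= 1) by apply Rmin_l.
  assert (Hep2 : ep <= 1 / (2 * L + 2)) by (eapply Rle_trans; [apply Rmin_r|apply Rmin_l]).
  assert (Hep3 : ep <= e0 / (2 * M + 2)) by (eapply Rle_trans; [apply Rmin_r|apply Rmin_r]).
  assert (Hep : 0 < ep).
  { unfold ep. repeat apply Rmin_glb_lt; try lra; apply Rdiv_lt_0_compat; lra. }
  assert (H1 : ep * (ep * L) <= 1 / 2).
  { assert (ep * L <= 1 / 2).
    { apply Rmult_le_compat_r with (r := 2 * L + 2) in Hep2; [|lra].
      replace (1 / (2 * L + 2) * (2 * L + 2)) with 1 in Hep2 by (field; lra). nra. }
    assert (0 <= ep * L) by nra. nra. }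
  assert (H2 : ep * (ep * M) <= e0 / 2).
  { assert (ep * M <= e0 / 2).
    { apply Rmult_le_compat_r with (r := 2 * M + 2) in Hep3; [|lra].
      replace (e0 / (2 * M + 2) * (2 * M + 2)) with e0 in Hep3 by (field; lra). nra. }
    assert (0 <= ep * M) by nra. nra. }
  exists ep. split; auto.
  set (phi := phil n beta c p e0 ep).
  assert (Hc : forall z, continuous phi z) by (apply phil_cont; auto).
  assert (Hfix : forall r, Tm n beta c p e0 ep phi r = phi r) by (intros; apply phil_fix; auto).
  assert (Hrange : forall r, e0 / 2 <= phi r <= 2 * e0).
  { intros r. rewrite <- Hfix. pose proof (Tm_range n beta c p e0 ep phi r He Hp Hep Hc).
    fold M in H. apply abs_le_inv in H. lra. }
  assert (HCl : forall t, Cl e0 phi t = phi t) by (intros; unfold Cl; apply clip_id; auto).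
  exists phi. split; [|split; [|split]]; auto.
  - rewrite <- Hfix. unfold Tm. rewrite clip_id by lra. rewrite RInt_pointR. ring.
  - intros r Hr.
    apply (is_derive_ext (Tm n beta c p e0 ep phi)). intros; apply Hfix.
    apply (is_derive_ext_loc (fun y => e0 - RInt (Nm n beta c p e0 phi) 0 y)).
    { apply (locally_open 0 ep); auto. intros y Hy. unfold Tm. rewrite clip_id by lra. reflexivity. }
    replace (- (Rpower (phi r) p * Qf n beta c phi r)) with (0 - Nm n beta c p e0 phi r).
    + apply (is_derive_minus (fun _ => e0) (fun y => RInt (Nm n beta c p e0 phi) 0 y)).
      apply is_derive_Reals, derivable_pt_lim_const. apply prim_der. apply Nm_cont; auto; lra.
    + unfold Nm. rewrite HCl, Rabs_right by lra. rewrite (Qf_ext n beta c (Cl e0 phi) phi) by auto. ring.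
Qed.


Theorem lemma2p1 (n : nat) (m eta0 rho1 beta alpha : R) :
  (3 <= n)%nat ->
  0 < m -> m < (INR n - 2) / INR n ->
  0 < eta0 -> 0 < rho1 ->
  beta < m * rho1 / (INR n - 2 - INR n * m) ->
  alpha = (2 * beta + rho1) / (1 - m) ->
  exists eps : R, 0 < eps /\
    exists f : R -> R,
      radial_sol n m alpha beta eta0 eps f /\
      (forall g : R -> R, radial_sol n m alpha beta eta0 eps g ->
         forall r, 0 <= r < eps -> g r = f r).
Proof.
  intros Hn Hm Hmn Heta Hrho _ _.
  assert (HnR : 3 <= INR n) by (replace 3 with (INR 3) by (simpl; ring); apply le_INR; auto).
  assert (Hm1 : m < 1).
  { assert ((INR n - 2) / INR n < 1).
    { apply (Rmult_lt_reg_r (INR n)). lra. unfold Rdiv. rewrite Rmult_assoc, Rinv_l by lra. lra. }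
    lra. }
  set (c := alpha - INR n * beta).
  destruct (exist_sol n beta c (1 - m) eta0 Heta ltac:(lra)) as [ep [Hep [phi [Hc [H0 [Hr Hd]]]]]].
  exists ep. split; auto. exists phi.
  assert (Hsol : radial_sol n m alpha beta eta0 ep phi).
  { apply id_to_sol; auto; try lra; try (intros; apply Hr). }
  split; auto.
  intros g Hg r Hr0.
  assert (Hg' := Hg). destruct Hg' as [_ [_ [Hgpos [Hg0 _]]]].
  destruct (Req_dec r 0) as [->|Hrn0]. rewrite Hg0, H0; auto.
  set (t1 := (r + ep) / 2).
  assert (Ht1 : 0 < t1 < ep) by (unfold t1; lra).
  set (gh := fun x => g (clip 0 t1 x)).
  assert (Hgh : forall x, 0 <= x <= t1 -> gh x = g x) by (intros; unfold gh; rewrite clip_id; auto).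
  assert (E : phi r = gh r).
  { apply (uniq_core n beta c (1 - m) t1 (eta0 / 2) phi gh); try lra; auto.
    - apply (hat_cont n m alpha beta eta0 ep g t1 Hg Ht1).
    - intros x Hx. apply Hr.
    - intros x Hx. rewrite Hgh by auto. apply Hgpos. lra.
    - rewrite Hgh by lra. rewrite H0, Hg0. auto.
    - intros x Hx. apply Hd. lra.
    - intros x Hx. apply (ode_id n m alpha beta eta0 ep g t1); auto; lra.
    - unfold t1; lra. }
  rewrite E, Hgh; auto. unfold t1; lra.
Qed.
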